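(* Let $L$ be a hyperbolic saddle of a planar vector field with characteristic number $\lambda<1$ having a separatrix loop, and suppose that inside the loop there is another saddle $I$ whose separatrix winds towards the loop in negative time. Consider an unfolding of this vector field in a generic one-parameter family with parameter $\varepsilon$, and let $\varepsilon_n\to 0$ be the parameter values at which a sparkling saddle connection between $L$ and $I$ making $n$ turns around the vanished loop occurs. Suppose that, in a coordinate $x$ on a semitransversal to the loop (with $x=0$ on the loop), the monodromy map of the saddle loop has the form $\Delta(x)=Cx^\lambda$ and the monodromy map for the perturbed loop has the form $Cx^\lambda+\varepsilon$. Let $B$ be the $x$-coordinate of the point where the semitransversal intersects the separatrix of $I$. Then $$\ln(-\ln\varepsilon_n)=-n\ln\lambda+\beta+\theta\lambda^n+o(\lambda^n),$$ where $\beta=\ln\bigl(\frac{\ln C}{1-\lambda}-\ln B\bigr)$ and $\theta=-e^{-\beta}\frac{\ln C}{1-\lambda}$.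
   Context: The characteristic number of a hyperbolic saddle with eigenvalues $\lambda_-<0<\lambda_+$ is $-\lambda_-/\lambda_+$. *)

(* Defs.v *)
From HB Require Import structures.
From mathcomp Require Import all_boot all_order all_algebra.
From mathcomp Require Import all_classical all_reals all_analysis.
Set Implicit Arguments. Unset Strict Implicit. Unset Printing Implicit Defensive.
Import Order.TTheory GRing.Theory Num.Theory.
Import numFieldNormedType.Exports.
Local Open Scope ring_scope.

Definition perturbed_monodromy (R : realType) (C lam eps : R) (x : R) : R :=
  C * x `^ lam + eps.

(* After the perturbation, the (outgoing) separatrix of L leaving the vanished
   loop first hits the semitransversal at Delta_eps(0) = eps; after n further
   turns around the vanished loop it hits it at Delta_eps^(n+1)(0).
   A sparkling saddle connection between L and I making n turns occurs at
   parameter eps iff this point is the point B of the separatrix of I. *)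
Definition sparkling_connection (R : realType) (C lam B eps : R) (n : nat) : Prop :=
  iter n.+1 (perturbed_monodromy C lam eps) 0 = B.

(* Main.v *)
Require Import Defs.
From HB Require Import structures.
From mathcomp Require Import all_boot all_order all_algebra.
From mathcomp Require Import all_classical all_reals all_analysis.
From mathcomp Require Import ring lra.
Import Order.TTheory GRing.Theory Num.Theory.
Import numFieldNormedType.Exports.
Local Open Scope classical_set_scope.
Local Open Scope ring_scope.

Section S1.
Variable R : realType.

Lemma ln_le_sub1 (x : R) : 0 < x -> ln x <= x - 1.
Proof.
move=> x0; have := @le_ln1Dx R (x - 1).
rewrite [1 + _]addrC subrK; apply; lra.
Qed.

Lemma ln_ge_1subV (x : R) : 0 < x -> 1 - x^-1 <= ln x.
Proof.
move=> x0; have := @ln_le_sub1 x^-1; rewrite invr_gt0 => /(_ x0).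
rewrite lnV ?posrE //; lra.
Qed.

Lemma iter_bound (lam C eps : R) (k : nat) :
  0 < lam -> lam < 1 -> 0 < C -> 0 < eps ->
  let K := ln C / (1 - lam) in
  let d := eps / (C * eps `^ lam) in
  let x := iter k.+1 (perturbed_monodromy C lam eps) 0 in
  eps <= x /\ lam ^+ k * (ln eps - K) <= ln x - K /\
  ln x - K <= lam ^+ k * (ln eps - K) + d / (1 - lam).
Proof.
move=> l0 l1 C0 e0 K d x.
have d0 : 0 <= d by rewrite /d divr_ge0 ?ltW // mulr_gt0 // powR_gt0.
have hK : ln C = K * (1 - lam) by rewrite /K divfK //; apply/eqP; lra.
rewrite {}/x; elim: k => [|k [IH1 [IH2 IH3]]].
  rewrite /= /perturbed_monodromy powR0 ?mulr0 ?add0r ?expr0 ?mul1r; last by apply/eqP; lra.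
  split => //; split => //.
  have : 0 <= d / (1 - lam) by rewrite divr_ge0 //; lra.
  lra.
set x := iter k.+1 _ 0 in IH1 IH2 IH3 *.
have x0 : 0 < x := Order.POrderTheory.lt_le_trans e0 IH1.
rewrite iterS -/x /perturbed_monodromy.
set P := C * x `^ lam.
have P0 : 0 < P by rewrite mulr_gt0 // powR_gt0.
have PC : C * eps `^ lam <= P.
  rewrite ler_pM2l // ge0_ler_powR ?nnegrE //; try lra.
have lnP : ln P = ln C + lam * ln x by rewrite lnM ?posrE ?powR_gt0 // ln_powR.
have Pe0 : 0 < P + eps by lra.
have hd1 : 0 <= ln (P + eps) - ln P.
  rewrite subr_ge0 ler_ln ?posrE //; lra.
have hd2 : ln (P + eps) - ln P <= d.
  rewrite -ln_div ?posrE //.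
  apply: le_trans (@ln_le_sub1 ((P + eps) / P) _) _; first by rewrite divr_gt0.
  have -> : (P + eps) / P - 1 = eps / P by field; apply/eqP; lra.
  rewrite /d ler_pM2l // lef_pV2 ?posrE // mulr_gt0 // powR_gt0 //.
split; first by rewrite lerDr ltW.
have E : ln (P + eps) - K = (ln (P + eps) - ln P) + lam * (ln x - K).
  by rewrite lnP hK; ring.
rewrite E exprS -mulrA.
have L1 : lam * (lam ^+ k * (ln eps - K)) <= lam * (ln x - K) by rewrite ler_pM2l.
have L2 : lam * (ln x - K) <= lam * (lam ^+ k * (ln eps - K) + d / (1 - lam)) by rewrite ler_pM2l.
split; first lra.
have : lam * (d / (1 - lam)) + d = d / (1 - lam).
  by field; apply/eqP; lra.
lra.
Qed.
End S1.

Section S2.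
Variable R : realType.

Lemma final_est (A K E c2 q L : R) :
  0 < A -> 0 < q -> q <= 1 -> 0 <= E -> E <= c2 * q ->
  q * (c2 + `|K|) <= A / 2 ->
  L = A / q - K + E ->
  `| ln L - (- ln q + ln A + - expR (- ln A) * K * q) | <=
    (2 * (c2 + `|K|) ^+ 2 / A ^+ 2 + c2 / A) * q ^+ 2.
Proof.
move=> A0 q0 q1 E0 Ec2 qc3 ->.
have c20 : 0 <= c2.
  have : 0 <= c2 * q by exact: le_trans Ec2.
  by rewrite pmulr_lge0.
have hK : - `|K| <= K <= `|K| by rewrite -ler_norml.
have qE : q * E <= c2 * q ^+ 2 by rewrite expr2 mulrA [c2 * q]mulrC -mulrA ler_pM2l.
set y := q * (A / q - K + E) / A.
have hy : y - 1 = q * (E - K) / A by rewrite /y; field; apply/andP; split; apply/eqP; lra.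
have hqEK : `| q * (E - K) | <= q * (c2 + `|K|).
  rewrite normrM gtr0_norm // ler_pM2l //.
  have : E <= c2 by apply: le_trans Ec2 _; rewrite -{2}(mulr1 c2) ler_wpM2l.
  rewrite ler_norml; lra.
have hqEK2 : `| y - 1 | <= 1 / 2.
  rewrite hy normrM normfV (gtr0_norm A0) ler_pdivrMr //.
  lra.
have y0 : 1 / 2 <= y by move: hqEK2; rewrite ler_norml; lra.
have ypos : 0 < y by lra.
have Lpos : 0 < A / q - K + E.
  have : 0 < q * (A / q - K + E) / A by [].
  rewrite pmulr_lgt0 ?invr_gt0 // pmulr_rgt0 //.
have -> : ln (A / q - K + E) = ln y + ln A - ln q.
  have -> : A / q - K + E = y * A / q.
    by rewrite /y; field; apply/andP; split; apply/eqP; lra.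
  rewrite ln_div ?posrE ?mulr_gt0 ?invr_gt0 // lnM ?posrE //.
rewrite expRN lnK ?posrE //.
set z := y - 1.
set w := ln y.
set c3 := c2 + `|K|.
have F1 : w <= z by exact: ln_le_sub1.
have F2 : - (2 * z ^+ 2) <= w - z.
  have h1 := @ln_ge_1subV _ _ ypos.
  have h2 : 1 - y^-1 - z = - (z ^+ 2 / y).
    by rewrite /z; field; apply/eqP; lra.
  have h3 : z ^+ 2 / y <= 2 * z ^+ 2.
    rewrite ler_pdivrMr //.
    have : 0 <= z ^+ 2 by rewrite sqr_ge0.
    nra.
  rewrite /w; lra.
have F3 : z ^+ 2 <= c3 ^+ 2 * q ^+ 2 / A ^+ 2.
  rewrite /z hy expr_div_n ler_pM2r ?invr_gt0 ?exprn_gt0 //.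
  move: hqEK; rewrite ler_norml => /andP [h1 h2].
  have : 0 <= q * c3 by rewrite /c3 (mulr_ge0 (ltW q0)) //; lra.
  rewrite -exprMn => hm; rewrite /c3 in hm *; nra.
have F4 : 0 <= q * E / A <= c2 * q ^+ 2 / A.
  apply/andP; split; first by rewrite divr_ge0 ?(ltW A0) // mulr_ge0 // ltW.
  by rewrite ler_pM2r ?invr_gt0.
have -> : w + ln A - ln q - (- ln q + ln A + - A^-1 * K * q) = (w - z) + q * E / A.
  by rewrite /z hy; field; apply/eqP; lra.
have -> : (2 * c3 ^+ 2 / A ^+ 2 + c2 / A) * q ^+ 2
        = 2 * (c3 ^+ 2 * q ^+ 2 / A ^+ 2) + c2 * q ^+ 2 / A.
  by field; apply/eqP; lra.
rewrite ler_norml; move: F4 => /andP[F4 F5].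
have : 0 <= z ^+ 2 by rewrite sqr_ge0.
lra.
Qed.

End S2.

Section S3.
Variable R : realType.

Lemma expRN_le (s : R) : 0 < s -> expR (- s) <= 4 / s ^+ 2.
Proof.
move=> s0.
have h1 : s / 2 <= expR (s / 2) by have := expR_ge1Dx (s / 2); lra.
have h2 : (s / 2) ^+ 2 <= expR s.
  have -> : s = s / 2 + s / 2 by field.
  rewrite expRD expr2 -[s / 2 + s / 2]/(s / 2 + s / 2).
  have : 0 <= s / 2 by lra.
  have -> : (s / 2 + s / 2) / 2 = s / 2 by field.
  move=> h; apply: ler_pM => //.
rewrite expRN -invf_div lef_pV2 ?posrE ?expR_gt0 ?divr_gt0 ?exprn_gt0 //.
by have <- : (s / 2) ^+ 2 = s ^+ 2 / 4 by field.
Qed.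

Lemma E_bound (lam C B eps : R) (n : nat) (K A q : R) :
  0 < lam -> lam < 1 -> 0 < C -> 0 < B -> 0 < eps ->
  ln B < ln C / (1 - lam) ->
  sparkling_connection C lam B eps n ->
  K = ln C / (1 - lam) -> A = K - ln B -> q = lam ^+ n ->
  0 <= - ln eps - (A / q - K) <=
  4 / ((1 - lam) * A) ^+ 2 / (1 - lam) * q.
Proof.
move=> l0 l1 C0 B0 e0 hB hsp hK hA hq.
have A0 : 0 < A by rewrite hA subr_gt0 hK.
have q0 : 0 < q by rewrite hq exprn_gt0.
have [_ [h1 h2]] := @iter_bound R lam C eps n l0 l1 C0 e0.
rewrite -hK hsp -hq in h1 h2.
set d := eps / (C * eps `^ lam) in h2.
set u := ln eps - K in h1 h2.
have hE : - ln eps - (A / q - K) = (- (q * u) - A) / q.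
  by rewrite /u; field; apply/eqP; lra.
have hd : d = expR ((1 - lam) * u).
  rewrite /d /u mulrBr mulrBl mul1r.
  have -> : (1 - lam) * K = ln C by rewrite hK mulrC divfK //; apply/eqP; lra.
  rewrite !expRB [lam * _]mulrC expRM !lnK ?posrE //.
  have := powR_gt0 lam e0; move=> hp; field; apply/andP; split; apply/eqP; lra.
have hBK : ln B - K = - A by rewrite hA; ring.
rewrite hBK in h1 h2.
have l10 : 0 < 1 - lam by lra.
have hu : u <= - A / q by rewrite ler_pdivlMr // mulrC.
set s := (1 - lam) * A / q.
have s0 : 0 < s by rewrite /s divr_gt0 // mulr_gt0.
have hus : (1 - lam) * u <= - s.
  have -> : - s = (1 - lam) * (- A / q) by rewrite /s; ring.
  by rewrite ler_pM2l.
have hds : d <= 4 / ((1 - lam) * A) ^+ 2 * q ^+ 2.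
  have -> : 4 / ((1 - lam) * A) ^+ 2 * q ^+ 2 = 4 / s ^+ 2.
    by rewrite /s; field; repeat (apply/andP; split); apply/eqP; lra.
  apply: le_trans _ (expRN_le _ s0).
  by rewrite hd ler_expR.
rewrite hE; apply/andP; split.
  by rewrite divr_ge0 ?(ltW q0) //; lra.
rewrite ler_pdivrMr //.
have : d / (1 - lam) <= 4 / ((1 - lam) * A) ^+ 2 * q ^+ 2 / (1 - lam).
  by rewrite ler_pM2r ?invr_gt0.
have -> : 4 / ((1 - lam) * A) ^+ 2 / (1 - lam) * q * q = 4 / ((1 - lam) * A) ^+ 2 * q ^+ 2 / (1 - lam).
  by field; repeat (apply/andP; split); apply/eqP; lra.
lra.
Qed.
End S3.

Theorem lemma1 (R : realType) (lam C B : R) (eps : nat -> R) :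
  0 < lam -> lam < 1 -> 0 < C -> 0 < B ->
  ln B < ln C / (1 - lam) ->
  (\forall n \near \oo, 0 < eps n) ->
  eps @ \oo --> (0 : R) ->
  (\forall n \near \oo, sparkling_connection C lam B (eps n) n) ->
  let beta := ln (ln C / (1 - lam) - ln B) in
  let theta := - expR (- beta) * (ln C / (1 - lam)) in
  (fun n : nat => ln (- ln (eps n)) - (- n%:R * ln lam + beta + theta * lam ^+ n))
    =o_\oo (fun n : nat => lam ^+ n).
Proof.
move=> l0 l1 C0 B0 hB hpos hcv hsp beta theta.
apply/eqoP => e e0.
set K := ln C / (1 - lam).
set A := K - ln B.
have A0 : 0 < A by rewrite /A subr_gt0.
set c2 := 4 / ((1 - lam) * A) ^+ 2 / (1 - lam).
set c3 := c2 + `|K|.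
set c4 := 2 * c3 ^+ 2 / A ^+ 2 + c2 / A.
have c20 : 0 <= c2.
  rewrite /c2 !divr_ge0 //; try lra; exact: sqr_ge0.
have c30 : 0 < c3 + 1 by rewrite /c3; have := normr_ge0 K; lra.
have c40 : 0 < c4 + 1.
  have h1 : 0 <= 2 * c3 ^+ 2 / A ^+ 2.
    by rewrite mulr_ge0 ?invr_ge0 ?exprn_ge0 ?(ltW A0) // mulr_ge0 // sqr_ge0.
  have h2 : 0 <= c2 / A by rewrite divr_ge0 // ltW.
  by rewrite /c4; lra.
have hq := @cvg_expr R lam.
have la : `|lam| < 1 by rewrite gtr0_norm.
move/(_ la): hq => hq.
have r10 : 0 < A / 2 / (c3 + 1) by rewrite !divr_gt0.
have r20 : 0 < e / (c4 + 1) by rewrite divr_gt0.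
near=> n.
have ep : 0 < eps n by near: n.
have e1 : `|eps n| < 1.
  near: n. exact: (cvgr0_norm_lt _ hcv 1 ltr01).
have hs : sparkling_connection C lam B (eps n) n by near: n.
have hq1 : `|lam ^+ n| < A / 2 / (c3 + 1) by near: n; exact: (cvgr0_norm_lt _ hq _ r10).
have hq2 : `|lam ^+ n| < e / (c4 + 1) by near: n; exact: (cvgr0_norm_lt _ hq _ r20).
set q := lam ^+ n in hq1 hq2 *.
have q0 : 0 < q by rewrite exprn_gt0.
rewrite gtr0_norm // in hq1 hq2; rewrite (gtr0_norm q0).
have q1 : q <= 1 by rewrite exprn_ile1 // ltW.
have [Eb1 Eb2] : 0 <= - ln (eps n) - (A / q - K) /\ - ln (eps n) - (A / q - K) <= c2 * q.
  by apply/andP; exact: (@E_bound R lam C B (eps n) n K A q l0 l1 C0 B0 ep hB hs erefl erefl erefl).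
have qc3 : q * (c2 + `|K|) <= A / 2.
  move: hq1; rewrite ltr_pdivlMr // -/c3 => h.
  have : 0 <= q by exact: ltW.
  nra.
have := @final_est R A K (- ln (eps n) - (A / q - K)) c2 q (- ln (eps n)) A0 q0 q1 Eb1 Eb2 qc3 ltac:(ring).
have -> : - n%:R * ln lam + beta + theta * q = - ln q + ln A + - expR (- ln A) * K * q.
  by rewrite /beta /theta -/K -/A /q lnXn // -mulr_natr; ring.
move=> h; apply: le_trans h _.
rewrite -/c3 -/c4.
move: hq2; rewrite ltr_pdivlMr // => h.
have : 0 <= q by exact: ltW.
nra.
Unshelve. all: by end_near.
Qed.
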